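(* Let $E\to X$ be a rank $n$ vector bundle on a nonsingular variety $X$ over an algebraically closed field, let $\nu=(\nu_1>\cdots>\nu_k>0)$ be a strict partition with $k\le n$, and set $\lambda=\nu0^{n-k}=(\nu_1,\dots,\nu_k,0,\dots,0)$. Then $$P_\lambda(E;t)=(\tau_E^k)_*\Bigl(x_1^{\nu_1}\cdots x_k^{\nu_k}\prod_{1\le i<j\le n,\ i\le k}(x_i-tx_j)\Bigr).$$
   Context: $t$ is an indeterminate, push-forwards act coefficientwise in $t$. For a sequence $\lambda$ of $n$ nonnegative integers, $R_\lambda(E;t)=(\tau_E)_*\bigl(x_1^{\lambda_1}\cdots x_n^{\lambda_n}\prod_{i<j}(x_i-tx_j)\bigr)$, where $\tau_E:Fl(E)\to X$ is the complete flag bundle of quotients of ranks $n,\dots,1$ and $(\tau_E)_*f(x)=\sum_{w\in S_n}w\bigl(f(y)/\prod_{i<j}(y_i-y_j)\bigr)$ evaluated at the Chern roots of $E$. $v_m(t)=\prod_{i=1}^m\frac{1-t^i}{1-t}$, $v_\lambda(t)=\prod_iv_{m_i}(t)$ where $m_i$ are the sizes of the level sets of $\lambda$, and $P_\lambda(E;t)=R_\lambda(E;t)/v_\lambda(t)$. $\tau_E^k:Fl^k(E)\to X$ is the flag bundle parametrizing flags of quotients of $E$ of ranks $k,k-1,\dots,1$, and for a polynomial $f$ symmetric in $y_{k+1},\dots,y_n$, $(\tau^k_E)_*f(x)=\sum_{w\in S_n/S_{n-k}}w\bigl(f(y)/\prod_{i<j,\,i\le k}(y_i-y_j)\bigr)$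 evaluated at the Chern roots of $E$. *)

(* Defs.v *)
(* Chern-root (splitting principle) rendering of push-forwards. *)
From HB Require Import structures.
From mathcomp Require Import all_boot all_order all_algebra all_fingroup.
Set Implicit Arguments. Unset Strict Implicit. Unset Printing Implicit Defensive.
Import Order.TTheory GRing.Theory Num.Theory.
Local Open Scope ring_scope.

(* Variables are indexed 0..n-1 (paper's x_1..x_n). A "polynomial" f is given
   as a function of the n variables; the Chern roots are y : 'I_n -> F. *)

Definition permute_vars (F : fieldType) (n : nat) (w : 'S_n) (y : 'I_n -> F) :
  'I_n -> F := fun i => y (w i).

(* full flag bundle push-forward:
   sum_{w in S_n} w( f(y) / prod_{i<j} (y_i - y_j) ) *)
Definition pushFull (F : fieldType) (n : nat) (f : ('I_n -> F) -> F)
  (y : 'I_n -> F) : F :=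
  \sum_(w : 'S_n)
    (let z := permute_vars w y in
     f z / \prod_(i : 'I_n) \prod_(j : 'I_n | (i < j)%N) (z i - z j)).

(* partial flag bundle Fl^k push-forward: sum over S_n / S_{n-k}, using the
   canonical coset representatives w (increasing on positions k..n-1) of the
   left cosets w S_{n-k}, S_{n-k} permuting the last n-k variables. *)
Definition pushPartial (F : fieldType) (n k : nat) (f : ('I_n -> F) -> F)
  (y : 'I_n -> F) : F :=
  \sum_(w : 'S_n | [forall i : 'I_n, forall j : 'I_n,
                      ((k <= i)%N && (i < j)%N) ==> (w i < w j)%N])
    (let z := permute_vars w y in
     f z / \prod_(i : 'I_n | (i < k)%N) \prod_(j : 'I_n | (i < j)%N) (z i - z j)).

Definition Rlam (F : fieldType) (n : nat) (lam : seq nat) (t : F)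
  (y : 'I_n -> F) : F :=
  pushFull (fun x : 'I_n -> F =>
     (\prod_(i : 'I_n) x i ^+ nth 0%N lam i) *
     \prod_(i : 'I_n) \prod_(j : 'I_n | (i < j)%N) (x i - t * x j)) y.

(* v_m(t) = prod_{i=1}^m (1-t^i)/(1-t) = prod_{i=1}^m (1 + t + ... + t^{i-1}) *)
Definition vm (F : fieldType) (m : nat) (t : F) : F :=
  \prod_(1 <= i < m.+1) \sum_(j < i) t ^+ j.

Definition vlam (F : fieldType) (lam : seq nat) (t : F) : F :=
  \prod_(c <- undup lam) vm (count_mem c lam) t.

Definition Plam (F : fieldType) (n : nat) (lam : seq nat) (t : F)
  (y : 'I_n -> F) : F :=
  Rlam lam t y / vlam lam t.

(* Main.v *)
Require Import Defs.
From HB Require Import structures.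
From mathcomp Require Import all_boot all_order all_algebra all_fingroup.
From mathcomp Require Import ring zify.
From Stdlib Require Import Lia FunctionalExtensionality.
Set Implicit Arguments. Unset Strict Implicit. Unset Printing Implicit Defensive.
Import Order.TTheory GRing.Theory Num.Theory.
Local Open Scope ring_scope.

Definition gg (F : fieldType) n (t : F) (z : 'I_n -> F) (a b : 'I_n) : F :=
  (z a - t * z b) / (z a - z b).
Definition TT (F : fieldType) n (t : F) (z : 'I_n -> F) (P : {set 'I_n}) r : F :=
  \prod_(q in P | q != r) gg t z r q.

Lemma TT_split (F : fieldType) n (t : F) (z : 'I_n -> F) (P : {set 'I_n}) a r :
  a \in P -> r != a -> TT t z P r = gg t z r a * TT t z (P :\ a) r.
Proof.
move=> aP ra; rewrite /TT (bigD1 a) /=; last by rewrite aP eq_sym.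
congr (_ * _); apply: eq_bigl => q; rewrite in_setD1; case: (q \in P); 
  by rewrite ?andbT ?andbF //= andbC.
Qed.

Lemma TT_a (F : fieldType) n (t : F) (z : 'I_n -> F) (P : {set 'I_n}) a :
  TT t z P a = \prod_(q in P :\ a) gg t z a q.
Proof. by apply: eq_bigl => q; rewrite in_setD1 andbC. Qed.

Lemma zneq (F : fieldType) n (z : 'I_n -> F) a b : injective z -> a != b -> z a - z b != 0.
Proof. by move=> zi ab; rewrite subr_eq0; apply: contra ab => /eqP/zi ->. Qed.

Lemma PF (F : fieldType) n (t : F) (z : 'I_n -> F) (zi : injective z) m :
  forall P : {set 'I_n}, #|P| = m -> forall X, (forall q, q \in P -> X != z q) ->
  \prod_(q in P) ((X - t * z q) / (X - z q)) =
  1 + (1 - t) * \sum_(r in P) (z r * TT t z P r / (X - z r)).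
Proof.
elim: m => [|m IH] P cP X HX.
  move/eqP: cP; rewrite cards_eq0 => /eqP ->.
  by rewrite !big_set0 mulr0 addr0.
have : (0 < #|P|)%N by rewrite cP.
case/card_gt0P => a aP.
have cP' : #|P :\ a| = m by move: cP; rewrite (cardsD1 a) aP add1n => -[].
have HX' : forall q, q \in P :\ a -> X != z q by move=> q; rewrite in_setD1 => /andP[_ /HX].
have HXa : X - z a != 0 by rewrite subr_eq0 HX.
rewrite (bigD1 a) //=.
rewrite (eq_bigl (fun q => q \in P :\ a)); last by move=> q; rewrite in_setD1 andbC.
rewrite (IH _ cP' X HX').
rewrite [X in _ = 1 + (1 - t) * X](bigD1 a) //= TT_a.
have Ha : forall q, q \in P :\ a -> z a != z q.
  move=> q; rewrite in_setD1 => /andP[qa _]; apply: contra qa => /eqP/zi ->; by [].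
rewrite /gg (IH _ cP' (z a) Ha).
set S1 := \sum_(r in P :\ a) _.
set S2 := \sum_(r in P :\ a) _.
have -> : \sum_(r in P | r != a) (z r * TT t z P r / (X - z r)) =
   (X - t * z a) / (X - z a) * S1 - (1 - t) * z a / (X - z a) * S2.
  rewrite /S1 /S2 !mulr_sumr -sumrB.
  rewrite (eq_bigl (fun q => q \in P :\ a)); last by move=> q; rewrite in_setD1 andbC.
  apply: eq_bigr => r; rewrite in_setD1 => /andP[ra rP].
  rewrite (TT_split _ _ aP ra) /gg.
  have h1 : z r - z a != 0 by apply: zneq.
  have ar : a != r by rewrite eq_sym.
  have h2 : z a - z r != 0 by apply: zneq.
  have h3 : X - z r != 0 by rewrite subr_eq0 HX.
  by field; rewrite ?h1 ?h2 ?h3 ?HXa.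
by field; rewrite ?HXa.
Qed.

Lemma QL (F : fieldType) n (t : F) (z : 'I_n -> F) (zi : injective z) m :
  forall P : {set 'I_n}, #|P| = m -> \sum_(r in P) TT t z P r = \sum_(j < m) t ^+ j.
Proof.
elim: m => [|m IH] P cP.
  by move/eqP: cP; rewrite cards_eq0 => /eqP ->; rewrite !big_set0 big_ord0.
have : (0 < #|P|)%N by rewrite cP.
case/card_gt0P => a aP.
have cP' : #|P :\ a| = m by move: cP; rewrite (cardsD1 a) aP add1n => -[].
have Ha : forall q, q \in P :\ a -> z a != z q.
  move=> q; rewrite in_setD1 => /andP[qa _]; apply: contra qa => /eqP/zi ->; by [].
rewrite (bigD1 a) //= TT_a /gg (PF t zi cP' Ha).
set S2 := \sum_(r in P :\ a) _.
have -> : \sum_(r in P | r != a) TT t z P r =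
   t * \sum_(r in P :\ a) TT t z (P :\ a) r - (1 - t) * S2.
  rewrite /S2 !mulr_sumr -sumrB.
  rewrite (eq_bigl (fun q => q \in P :\ a)); last by move=> q; rewrite in_setD1 andbC.
  apply: eq_bigr => r; rewrite in_setD1 => /andP[ra rP].
  rewrite (TT_split _ _ aP ra) /gg.
  have h1 : z r - z a != 0 by apply: zneq.
  have ar : a != r by rewrite eq_sym.
  have h2 : z a - z r != 0 by apply: zneq.
  by field; rewrite ?h1 ?h2.
rewrite (IH _ cP') big_ord_recl /= expr0.
have -> : \sum_(i < m) t ^+ (bump 0 i) = t * \sum_(i < m) t ^+ i.
  by rewrite mulr_sumr; apply: eq_bigr => i _; rewrite exprS.
by ring.
Qed.


Definition inG n (P : {set 'I_n}) (s : 'S_n) : bool :=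
  [forall i, (i \notin P) ==> (s i == i)].
Definition HH (F : fieldType) n (t : F) (z : 'I_n -> F) (P : {set 'I_n}) (s : 'S_n) : F :=
  \prod_(i in P) \prod_(j in P | (i < j)%N) gg t z (s i) (s j).

Lemma inG_fix n (P : {set 'I_n}) s x : inG P s -> x \notin P -> s x = x.
Proof. by move=> /forallP /(_ x) /implyP H /H /eqP. Qed.

Lemma inG_mem n (P : {set 'I_n}) s x : inG P s -> (s x \in P) = (x \in P).
Proof.
move=> H; case xP: (x \in P); last by rewrite (inG_fix H) ?xP.
apply/negbFE/negP => /negP sxP.
have := inG_fix H sxP => /perm_inj sx.
by move: sxP; rewrite sx xP.
Qed.

Lemma fiber_iff n (P : {set 'I_n}) p r (s : 'S_n) : p \in P -> r \in P ->
  (inG P (s * tperm p r)%g && ((s * tperm p r)%g p == r)) = inG (P :\ p) s.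
Proof.
move=> pP rP; apply/andP/forallP => [[H1 /eqP H2] x|H].
  apply/implyP; rewrite in_setD1 negb_and negbK => xP'.
  have e : forall y, s y = tperm p r ((s * tperm p r)%g y) by move=> y; rewrite permM tpermK.
  case: (x =P p) => [->|/eqP xp].
    by rewrite e H2 tpermR.
  move: xP'; rewrite (negbTE xp) /= => xP.
  rewrite e (inG_fix H1 xP) tpermD //.
    by rewrite eq_sym.
  by apply: contra xP => /eqP <-.
have sp : s p = p by move: (H p); rewrite in_setD1 eqxx /= => /eqP.
split; last by rewrite permM sp tpermL.
apply/forallP => x; apply/implyP => xP.
have xp : x != p by apply: contra xP => /eqP ->.
have xr : x != r by apply: contra xP => /eqP ->.
rewrite permM; move: (H x); rewrite in_setD1 (negbTE xP) andbF /= => /eqP ->.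
by rewrite tpermD // eq_sym.
Qed.

Lemma HH_split (F : fieldType) n (t : F) (z : 'I_n -> F) (P : {set 'I_n}) p r (s : 'S_n) :
  p \in P -> r \in P -> (forall j, j \in P -> (p <= j)%N) -> inG (P :\ p) s ->
  HH t z P (s * tperm p r)%g = TT t z P r * HH t (fun x => z (tperm p r x)) (P :\ p) s.
Proof.
move=> pP rP pmin sG.
have := fiber_iff s pP rP; rewrite sG => /andP[sG' /eqP e].
rewrite /HH (bigD1 p) //=; congr (_ * _).
  rewrite e /TT; symmetry.
  rewrite (reindex_inj (@perm_inj _ (s * tperm p r)%g)).
  apply: eq_bigl => j; rewrite inG_mem //.
  have -> : ((s * tperm p r)%g j != r) = (j != p).
    by have := inj_eq (@perm_inj _ (s * tperm p r)%g) j p; rewrite e => ->.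
  case jP: (j \in P) => //=.
  by rewrite -(inj_eq val_inj) /= ltn_neqAle eq_sym pmin ?andbT.
apply: eq_big => [i|i]; first by rewrite in_setD1 andbC.
move=> /andP[iP ip].
apply: eq_big => [j|j _]; last by rewrite !permM.
rewrite in_setD1; case: (j =P p) => [->|] //=.
by rewrite ltnNge pmin // andbF.
Qed.

Lemma HL (F : fieldType) n (t : F) m : forall (z : 'I_n -> F), injective z ->
  forall P : {set 'I_n}, #|P| = m -> \sum_(s | inG P s) HH t z P s = vm m t.
Proof.
elim: m => [|m IH] z zi P cP.
  move/eqP: cP; rewrite cards_eq0 => /eqP ->.
  rewrite (big_pred1 1%g); last first.
    move=> s; rewrite /= /inG; apply/forallP/eqP => [H|-> i]; last by rewrite perm1 eqxx implybT.
    by apply/permP => i; rewrite perm1; move: (H i); rewrite in_set0 /= => /eqP.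
  by rewrite /HH big_set0 /vm big_geq.
have : (0 < #|P|)%N by rewrite cP.
case/card_gt0P => a0 a0P.
case: (@arg_minnP _ a0 (fun i => i \in P) (fun i : 'I_n => val i) a0P) => p pP pmin.
set P' := P :\ p.
have cP' : #|P'| = m by move: cP; rewrite (cardsD1 p) pP add1n => -[].
rewrite (partition_big (fun s : 'S_n => s p) (fun r => r \in P)); last first.
  by move=> s sG; rewrite inG_mem.
transitivity (\sum_(r in P) TT t z P r * vm m t).
  apply: eq_bigr => r rP.
  rewrite (reindex_inj (mulIg (tperm p r))) /=.
  rewrite (eq_bigl (fun s => inG P' s)); last by move=> s; rewrite fiber_iff.
  have zi' : injective (fun x => z (tperm p r x)) by move=> x y /zi /perm_inj.
  rewrite -(IH (fun x => z (tperm p r x)) zi' P' cP') mulr_sumr.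
  by apply: eq_bigr => s sG; rewrite HH_split.
by rewrite -big_distrl /= (QL t zi cP) /vm [in RHS]big_nat_recr //= mulrC.
Qed.

Lemma inGM n (P : {set 'I_n}) s r : inG P s -> inG P r -> inG P (s * r)%g.
Proof.
move=> hs hr; apply/forallP => x; apply/implyP => xP.
by rewrite permM (inG_fix hs xP) (inG_fix hr xP).
Qed.

Lemma inGV n (P : {set 'I_n}) s : inG P s -> inG P (s^-1)%g.
Proof.
move=> hs; apply/forallP => x; apply/implyP => xP.
by rewrite -{1}(inG_fix hs xP) permK.
Qed.

Lemma incr_id n (f : 'S_n) : (forall i j : 'I_n, (i < j)%N -> (f i < f j)%N) -> f = 1%g.
Proof.
have ge : forall g : 'S_n, (forall i j : 'I_n, (i < j)%N -> (g i < g j)%N) ->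
   forall i : 'I_n, (i <= g i)%N.
  move=> g Hg.
  suff H : forall m (i : 'I_n), val i = m -> (m <= g i)%N by move=> i; exact: H.
  elim=> [//|m IH] i hi.
  have hm : (m < n)%N by rewrite -hi (leq_trans (leqnSn _)) ?ltn_ord.
  have := IH (Ordinal hm) erefl.
  have := Hg (Ordinal hm) i; rewrite hi /= => /(_ (ltnSn _)).
  by move=> h1 h2; apply: leq_ltn_trans h2 h1.
move=> Hf.
have Hg : forall i j : 'I_n, (i < j)%N -> ((f^-1)%g i < (f^-1)%g j)%N.
  move=> i j ij; case: (ltngtP ((f^-1)%g i) ((f^-1)%g j)) => // h.
    by have := Hf _ _ h; rewrite !permKV => /(ltn_trans ij); rewrite ltnn.
  by move/val_inj/perm_inj: h => e; move: ij; rewrite e ltnn.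
apply/permP => i; rewrite perm1; apply/val_inj/eqP; rewrite eqn_leq ge // andbT.
by have := ge _ Hg (f i); rewrite permK.
Qed.

Definition Pk n k : {set 'I_n} := [set i : 'I_n | (k <= i)%N].
Definition Cp n k (w : 'S_n) : bool :=
  [forall i : 'I_n, forall j : 'I_n, ((k <= i)%N && (i < j)%N) ==> (w i < w j)%N].

Lemma CpP n k (u : 'S_n) (i j : 'I_n) : Cp k u -> (k <= i)%N -> (i < j)%N -> (u i < u j)%N.
Proof. by move=> /forallP/(_ i)/forallP/(_ j)/implyP H ki ij; apply: H; rewrite ki. Qed.

Lemma rho_id n k (r u : 'S_n) : inG (Pk n k) r -> Cp k u -> Cp k (r * u)%g -> r = 1%g.
Proof.
move=> rG Cu Cru; apply: incr_id => i j ij.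
have memP : forall x : 'I_n, (k <= r x)%N = (k <= x)%N.
  by move=> x; have := inG_mem x rG; rewrite !inE.
have fixP : forall x : 'I_n, (x < k)%N -> r x = x.
  by move=> x xk; apply: (inG_fix rG); rewrite inE -ltnNge.
case: (leqP k i) => ki.
  have kj : (k <= j)%N by apply: leq_trans ki (ltnW ij).
  have := CpP Cru ki ij; rewrite !permM => h1.
  case: (ltngtP (r i) (r j)) => // h.
    have := CpP Cu (_ : (k <= r j)%N) h; rewrite memP => /(_ kj) h2.
    by have := ltn_trans h1 h2; rewrite ltnn.
  by move/val_inj/perm_inj: h => e; move: ij; rewrite e ltnn.
rewrite (fixP _ ki); case: (leqP k j) => kj.
  by apply: leq_trans ki _; rewrite memP.
by rewrite (fixP _ kj).
Qed.

Lemma coset_uniq n k (s s' u u' : 'S_n) : inG (Pk n k) s -> inG (Pk n k) s' ->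
  Cp k u -> Cp k u' -> (s * u = s' * u')%g -> u = u'.
Proof.
move=> sG s'G Cu Cu' e.
have e' : u' = ((s'^-1 * s) * u)%g by rewrite -mulgA e mulKg.
have r1 := rho_id (inGM (inGV s'G) sG) Cu (_ : Cp k ((s'^-1 * s) * u)%g).
by rewrite e' r1 ?mul1g // -e'.
Qed.

Definition W n (v : 'S_n) : nat := (\sum_(x : 'I_n) x * v x)%N.

Lemma sum2 n (G : 'I_n -> nat) (i j : 'I_n) : i != j ->
  (\sum_x G x = G i + G j + \sum_(x | (x != i) && (x != j)) G x)%N.
Proof.
move=> ij; rewrite (bigD1 i) //= (bigD1 j) /=; last by rewrite eq_sym.
by rewrite addnA.
Qed.

Lemma W_swap n (u : 'S_n) (i j : 'I_n) : i != j ->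
  (W (tperm i j * u)%g + i * u i + j * u j = W u + i * u j + j * u i)%N.
Proof.
move=> ij; rewrite /W (sum2 _ ij) [in RHS](sum2 _ ij) !permM tpermL tpermR.
have -> : (\sum_(x | (x != i) && (x != j)) x * (tperm i j * u)%g x =
          \sum_(x | (x != i) && (x != j)) x * u x)%N.
  by apply: eq_bigr => x /andP[xi xj]; rewrite permM tpermD // eq_sym.
lia.
Qed.

Lemma coset_ex n k (w : 'S_n) :
  exists2 u, Cp k u & exists2 s, inG (Pk n k) s & w = (s * u)%g.
Proof.
have G1 : inG (Pk n k) 1%g by apply/forallP => x; rewrite perm1 eqxx implybT.
case: (@arg_maxnP _ 1%g (fun s => inG (Pk n k) s) (fun s => W (s * w)%g) G1) => r rG rmax.
exists (r * w)%g; last by exists (r^-1)%g; [exact: inGV | rewrite mulKg].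
apply/forallP => i; apply/forallP => j; apply/implyP => /andP[ki ij].
rewrite ltnNge; apply/negP => h.
have ijn : i != j by apply/eqP => e; move: ij; rewrite e ltnn.
have h' : ((r * w)%g j < (r * w)%g i)%N.
  rewrite ltn_neqAle h andbT (inj_eq val_inj) (inj_eq (@perm_inj _ (r * w)%g)).
  by rewrite eq_sym.
have tG : inG (Pk n k) (tperm i j).
  apply/forallP => x; apply/implyP; rewrite inE -ltnNge => xk.
  rewrite tpermD //; apply/negP => /eqP ex; move: xk; rewrite -ex ltnNge.
    by rewrite ki.
  by rewrite (leq_trans ki (ltnW ij)).
have := rmax _ (inGM tG rG); rewrite -mulgA => hle.
have := W_swap (r * w)%g ijn.
move: hle h' ij; set a := W _; set b := W _; set ui := nat_of_ord _; set uj := nat_of_ord _.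
move=> hle h' ij e.
nia.
Qed.

Lemma coset_sum (F : fieldType) n k (A : 'S_n -> F) :
  \sum_(w : 'S_n) A w = \sum_(u | Cp k u) \sum_(s | inG (Pk n k) s) A (s * u)%g.
Proof.
symmetry.
transitivity (\sum_(u | Cp k u) \sum_(w in [set (s * u)%g | s in [set s | inG (Pk n k) s]]) A w).
  apply: eq_bigr => u _; rewrite big_imset /=; last by move=> x y _ _ /mulIg.
  by apply: eq_bigl => s; rewrite inE.
rewrite (exchange_big_dep xpredT) //=.
apply: eq_bigr => w _.
case: (coset_ex k w) => u0 Cu0 [s0 s0G e0].
rewrite (big_pred1 u0) // => u /=.
apply/andP/eqP => [[Cu /imsetP [s sG e]]|->].
  rewrite inE in sG.
  by apply: (coset_uniq sG s0G Cu Cu0); rewrite -e.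
split => //; apply/imsetP; exists s0 => //; by rewrite inE.
Qed.

Lemma prod_split (F : fieldType) n k (X : 'I_n -> 'I_n -> F) :
  \prod_(i : 'I_n) \prod_(j : 'I_n | (i < j)%N) X i j =
  (\prod_(i : 'I_n | (i < k)%N) \prod_(j : 'I_n | (i < j)%N) X i j) *
  \prod_(i in Pk n k) \prod_(j in Pk n k | (i < j)%N) X i j.
Proof.
rewrite (bigID (fun i : 'I_n => (i < k)%N)) /=; congr (_ * _).
apply: eq_big => [i|i]; first by rewrite /Pk inE ltnNge negbK.
move=> ik; apply: eq_bigl => j; rewrite /Pk inE; case ij: (i < j)%N; rewrite ?andbF ?andbT //.
by rewrite -leqNgt in ik; rewrite (leq_trans ik (ltnW ij)).
Qed.

Lemma prod_inv (F : fieldType) n k (X : 'I_n -> 'I_n -> F) (s : 'S_n) :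
  inG (Pk n k) s ->
  \prod_(i : 'I_n | (i < k)%N) \prod_(j : 'I_n | (i < j)%N) X (s i) (s j) =
  \prod_(i : 'I_n | (i < k)%N) \prod_(j : 'I_n | (i < j)%N) X i j.
Proof.
move=> sG.
have fixP : forall x : 'I_n, (x < k)%N -> s x = x.
  by move=> x xk; apply: (inG_fix sG); rewrite inE -ltnNge.
have memP : forall x : 'I_n, (k <= s x)%N = (k <= x)%N.
  by move=> x; have := inG_mem x sG; rewrite !inE.
apply: eq_bigr => i ik; rewrite (fixP _ ik).
rewrite [RHS](reindex_inj (@perm_inj _ s)); apply: eq_bigl => j.
case: (leqP k j) => kj.
  by rewrite (leq_trans ik kj) (leq_trans ik) // memP.
by rewrite fixP.
Qed.

Lemma Asum_fact (F : fieldType) n (nu : seq nat) (t : F) (z : 'I_n -> F) :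
  ((\prod_(i : 'I_n) z i ^+ nth 0%N (nu ++ nseq (n - size nu) 0%N) i) *
    \prod_(i : 'I_n) \prod_(j : 'I_n | (i < j)%N) (z i - t * z j)) /
   \prod_(i : 'I_n) \prod_(j : 'I_n | (i < j)%N) (z i - z j)
 = ((\prod_(i : 'I_n | (i < size nu)%N) z i ^+ nth 0%N nu i) *
    \prod_(i : 'I_n | (i < size nu)%N) \prod_(j : 'I_n | (i < j)%N) (z i - t * z j)) /
   \prod_(i : 'I_n | (i < size nu)%N) \prod_(j : 'I_n | (i < j)%N) (z i - z j) *
   \prod_(i in Pk n (size nu)) \prod_(j in Pk n (size nu) | (i < j)%N) gg t z i j.
Proof.
have e1 : \prod_(i : 'I_n) z i ^+ nth 0%N (nu ++ nseq (n - size nu) 0%N) i =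
          \prod_(i : 'I_n | (i < size nu)%N) z i ^+ nth 0%N nu i.
  rewrite (bigID (fun i : 'I_n => (i < size nu)%N)) /=.
  have -> : \prod_(i < n | ~~ (i < size nu)%N) z i ^+ nth 0%N (nu ++ nseq (n - size nu) 0%N) i = 1.
    apply: big1 => i; rewrite -leqNgt => ki.
    by rewrite nth_cat ltnNge ki /= nth_nseq; case: ifP => _; exact: expr0.
  by rewrite mulr1; apply: eq_bigr => i ik; rewrite nth_cat ik.
have e2 : \prod_(i in Pk n (size nu)) \prod_(j in Pk n (size nu) | (i < j)%N) gg t z i j =
   (\prod_(i in Pk n (size nu)) \prod_(j in Pk n (size nu) | (i < j)%N) (z i - t * z j)) /
   \prod_(i in Pk n (size nu)) \prod_(j in Pk n (size nu) | (i < j)%N) (z i - z j).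
  by rewrite -prodf_div; apply: eq_bigr => i _; rewrite -prodf_div.
rewrite e1 e2 (prod_split (size nu) (fun i j => z i - t * z j))
   (prod_split (size nu) (fun i j => z i - z j)).
by rewrite mulf_div mulrA.
Qed.

Lemma card_Pk n k : #|Pk n k| = (n - k)%N.
Proof.
rewrite -sum1_card.
rewrite (eq_bigl (fun i : 'I_n => true && (k <= i)%N)); last by move=> i; rewrite /Pk inE.
by rewrite -(big_geq_mkord k n xpredT (fun _ => 1%N)) sum_nat_const_nat muln1.
Qed.

Lemma vm1 (F : fieldType) (t : F) : vm 1 t = 1.
Proof. by rewrite /vm big_nat1 big_ord1 expr0. Qed.

Lemma vlam_eq (F : fieldType) (nu : seq nat) m (t : F) :
  sorted (fun a b => (b < a)%N) nu -> all (fun a => (0 < a)%N) nu ->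
  vlam (nu ++ nseq m 0%N) t = vm m t.
Proof.
move=> Hs Hp.
have un : uniq nu.
  apply: (sorted_uniq _ _ Hs).
    by move=> a b c /= h1 h2; apply: ltn_trans h2 h1.
  by move=> a /=; rewrite ltnn.
have n0 : (0%N \in nu) = false.
  by apply/negP => h; have := allP Hp _ h; rewrite ltnn.
rewrite /vlam (bigID (fun c => c == 0%N)) /=.
rewrite [X in _ * X]big1_seq ?mulr1; last first.
  move=> c /andP[c0 cin]; rewrite mem_undup mem_cat mem_nseq (negbTE c0) andbF orbF in cin.
  by rewrite count_cat count_uniq_mem // cin count_nseq /= eq_sym (negbTE c0) mul0n addn0 vm1.
rewrite -big_filter.
case: m => [|m].
  rewrite cats0 (_ : [seq x <- undup nu | x == 0%N] = [::]) ?big_nil /vm ?big_geq //.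
  apply/eqP; rewrite -size_eq0 size_filter; apply/eqP/count_memPn.
  by rewrite mem_undup n0.
rewrite (_ : [seq x <- undup (nu ++ nseq m.+1 0%N) | x == 0%N] = [:: 0%N]).
  by rewrite big_seq1 count_cat count_uniq_mem // n0 count_nseq /= mul1n.
apply: filter_pred1_uniq; first exact: undup_uniq.
by rewrite mem_undup mem_cat mem_nseq eqxx orbT.
Qed.

Lemma Lsum_inv (F : fieldType) n (nu : seq nat) (t : F) (z : 'I_n -> F) (s : 'S_n) :
  inG (Pk n (size nu)) s ->
  ((\prod_(i : 'I_n | (i < size nu)%N) permute_vars s z i ^+ nth 0%N nu i) *
    \prod_(i : 'I_n | (i < size nu)%N) \prod_(j : 'I_n | (i < j)%N)
       (permute_vars s z i - t * permute_vars s z j)) /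
   \prod_(i : 'I_n | (i < size nu)%N) \prod_(j : 'I_n | (i < j)%N)
       (permute_vars s z i - permute_vars s z j)
 = ((\prod_(i : 'I_n | (i < size nu)%N) z i ^+ nth 0%N nu i) *
    \prod_(i : 'I_n | (i < size nu)%N) \prod_(j : 'I_n | (i < j)%N) (z i - t * z j)) /
   \prod_(i : 'I_n | (i < size nu)%N) \prod_(j : 'I_n | (i < j)%N) (z i - z j).
Proof.
move=> sG; rewrite /permute_vars.
rewrite (prod_inv (fun a b => z a - t * z b) sG) (prod_inv (fun a b => z a - z b) sG).
congr (_ * _ / _); apply: eq_bigr => i ik.
by rewrite (inG_fix sG) // /Pk inE -ltnNge.
Qed.

Theorem mainTheorem4 (F : fieldType) (n : nat) (nu : seq nat) (t : F)
  (y : 'I_n -> F) :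
  injective y ->
  sorted (fun a b => (b < a)%N) nu ->
  all (fun a => (0 < a)%N) nu ->
  (size nu <= n)%N ->
  vlam (nu ++ nseq (n - size nu) 0%N) t != 0 ->
  Plam (nu ++ nseq (n - size nu) 0%N) t y =
  pushPartial (size nu)
    (fun x : 'I_n -> F =>
       (\prod_(i : 'I_n | (i < size nu)%N) x i ^+ nth 0%N nu i) *
       \prod_(i : 'I_n | (i < size nu)%N) \prod_(j : 'I_n | (i < j)%N)
          (x i - t * x j)) y.
Proof.
move=> yi Hs Hp Hk Hv.
rewrite /Plam; move: Hv; rewrite vlam_eq // => Hv.
set PP := pushPartial _ _ _.
suff -> : Rlam (nu ++ nseq (n - size nu) 0%N) t y = vm (n - size nu) t * PP.
  by rewrite mulrC mulKf.
rewrite /Rlam /pushFull (coset_sum (size nu)) /PP /pushPartial mulr_sumr.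
apply: eq_big => // u Cu.
set zu := permute_vars u y.
have zi : injective zu by move=> a b /yi /perm_inj.
transitivity (\sum_(s | inG (Pk n (size nu)) s)
   ((\prod_(i : 'I_n | (i < size nu)%N) zu i ^+ nth 0%N nu i) *
    \prod_(i : 'I_n | (i < size nu)%N) \prod_(j : 'I_n | (i < j)%N) (zu i - t * zu j)) /
   \prod_(i : 'I_n | (i < size nu)%N) \prod_(j : 'I_n | (i < j)%N) (zu i - zu j)
   * HH t zu (Pk n (size nu)) s).
  apply: eq_bigr => s sG /=.
  rewrite (_ : permute_vars (s * u)%g y = permute_vars s zu); last first.
    by apply: functional_extensionality => i; rewrite /permute_vars permM.
  by rewrite Asum_fact Lsum_inv.
by rewrite -mulr_sumr (HL t zi (card_Pk _ _)) mulrC.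
Qed.
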